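(* Let $N$ be a numerical monoid and let $r\in\mathbb{Q}_{>1}\setminus\mathbb{N}$ be such that $S_{r,N}$ is atomic. Let $x$ be a nonzero element of $S_{r,N}$ and let $z=\sum_{i=0}^{n}c_i r^{s_i}\in\mathsf{Z}(x)$ with $c_0,\dots,c_n\in\mathbb{N}$. Then: (1) $|z|=\min\mathsf{L}(x)$ if and only if $c_i<\mathsf{n}(r)^{\delta_i}$ for every $i\in\{0,\dots,n\}$; (2) there is exactly one factorization of $x$ of minimum length; (3) $|z|=\max\mathsf{L}(x)$ if and only if $c_i<\mathsf{d}(r)^{\delta_{i-1}}$ for every $i\in\{1,\dots,n\}$; (4) there is exactly one factorization of $x$ of maximum length; (5) if $c_i<\mathsf{d}(r)$ for every $i\in\{0,\dots,n\}$, then $|\mathsf{Z}(x)|=1$.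
   Context: $\mathbb{N}=\{0,1,2,\dots\}$. A numerical monoid $N$ is an additive submonoid of $\mathbb{N}$ with finite complement in $\mathbb{N}$. For $r\in\mathbb{Q}_{>0}$ write $r=\mathsf{n}(r)/\mathsf{d}(r)$ with $\mathsf{n}(r),\mathsf{d}(r)$ coprime positive integers. The exponential Puiseux semiring $S_{r,N}$ is the additive submonoid of $\mathbb{Q}_{\ge 0}$ generated by $\{r^k: k\in N\}$. Let $s_0<s_1<s_2<\cdots$ be the elements of $N$ in increasing order (so $s_0=0$) and $\delta_n=s_{n+1}-s_n$. When $\mathsf{n}(r)>1$ and $\mathsf{d}(r)>1$, $S_{r,N}$ is atomic with set of atoms $\{r^{s}: s\in N\}$. For an atomic monoid $M$ (written additively), $\mathsf{Z}(M)$ is the free commutative monoid on the set of atoms, $\pi:\mathsf{Z}(M)\to M$ the homomorphism sending each atom to itself, $\mathsf{Z}(x)=\pi^{-1}(x)$ the set of factorizations of $x$, $|z|$ the number of atoms (with multiplicity) in $z$, and $\mathsf{L}(x)=\{|z|: z\in\mathsf{Z}(x)\}$ the set of lengths of $x$. A factorization $\sum c_i r^{s_i}$ means the formal sum with $c_i$ copies of the atom $r^{s_i}$. *)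

(* Defs.v *)
From mathcomp Require Import all_boot all_order all_algebra.
Set Implicit Arguments. Unset Strict Implicit. Unset Printing Implicit Defensive.
Import Order.TTheory GRing.Theory Num.Theory.
Local Open Scope ring_scope.

Definition numerical_monoid (N : pred nat) : Prop :=
  [/\ N 0%N, (forall a b, N a -> N b -> N (a + b)%N)
    & exists B : nat, forall n, (B <= n)%N -> N n].

Definition increasing_enum (N : pred nat) (s : nat -> nat) : Prop :=
  (forall i, (s i < s i.+1)%N) /\ (forall k, N k <-> exists i, s i = k).

Definition puiseux (r : rat) (N : pred nat) (x : rat) : Prop :=
  exists c : seq nat, (forall k, (nth 0%N c k != 0)%N -> N k) /\
    x = \sum_(k < size c) (nth 0%N c k)%:R * r ^+ k.

Definition is_atom (M : rat -> Prop) (a : rat) : Prop :=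
  [/\ M a, a != 0 & forall u v, M u -> M v -> a = u + v -> u = 0 \/ v = 0].

Definition atomic (M : rat -> Prop) : Prop :=
  forall x, M x -> x != 0 ->
    exists l : seq rat, (forall a, a \in l -> is_atom M a) /\ x = \sum_(a <- l) a.

(* A factorization  sum_i c_i r^{s_i}  is encoded by the coefficient sequence c
   (c`_i = multiplicity of the atom r^{s_i}; missing entries are 0). *)
Definition fact_value (r : rat) (s : nat -> nat) (c : seq nat) : rat :=
  \sum_(i < size c) (nth 0%N c i)%:R * r ^+ (s i).

Definition is_fact (r : rat) (s : nat -> nat) (x : rat) (c : seq nat) : Prop :=
  fact_value r s c = x.

Definition fact_len (c : seq nat) : nat := sumn c.

(* Equality of factorizations (as elements of the free commutative monoid). *)
Definition fact_eq (c d : seq nat) : Prop := forall i, nth 0%N c i = nth 0%N d i.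

Definition is_min_fact r s x c : Prop :=
  is_fact r s x c /\ forall d, is_fact r s x d -> (fact_len c <= fact_len d)%N.

Definition is_max_fact r s x c : Prop :=
  is_fact r s x c /\ forall d, is_fact r s x d -> (fact_len d <= fact_len c)%N.

(* Main.v *)
Require Import Defs.
From mathcomp Require Import all_boot all_order all_algebra zify ring lra.
From Stdlib Require Import Classical.
Import Order.TTheory GRing.Theory Num.Theory.

Lemma key_min (A B k d e u v R1 R2 : nat) : 0 < A -> coprime A B ->
  u < A ^ d -> v < A ^ d -> A ^ (k+d) %| R1 -> A ^ (k+d) %| R2 ->
  u * A ^ k * B ^ e + R1 = v * A ^ k * B ^ e + R2 -> u = v.
Proof.
move=> A0 co.
wlog le: u v R1 R2 / v <= u.
  move=> H hu hv d1 d2 E; case: (leqP v u) => h; first by apply: (H u v R1 R2).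
  by symmetry; apply: (H v u R2 R1) => //; apply: ltnW.
move=> hu hv d1 d2 E.
have hX : (u-v) * A ^ k * B ^ e = R2 - R1.
  rewrite !mulnBl; move: E; generalize (u * A ^ k * B ^ e) (v * A ^ k * B ^ e) => X Y E; lia.
have : A ^ (k+d) %| (u-v) * A ^ k * B ^ e by rewrite hX dvdn_sub.
rewrite expnD mulnAC [_ * A ^ k]mulnC dvdn_pmul2l ?expn_gt0 ?A0 // Gauss_dvdl; last first.
  by apply: coprimeXl; apply: coprimeXr.
move=> dv; apply/eqP; rewrite eqn_leq le andbT leqNgt; apply/negP => lt.
have := dvdn_leq _ dv; rewrite subn_gt0 => /(_ lt) H.
have: u - v < A ^ d by apply: leq_ltn_trans hu; apply: leq_subr.
by rewrite ltnNge H.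
Qed.

Lemma key_max (A B k d e u v R1 R2 : nat) : 0 < B -> coprime A B ->
  u < B ^ d -> v < B ^ d -> B ^ (e+d) %| R1 -> B ^ (e+d) %| R2 ->
  u * A ^ k * B ^ e + R1 = v * A ^ k * B ^ e + R2 -> u = v.
Proof.
move=> B0 co hu hv d1 d2 E.
apply: (@key_min B A e d k u v R1 R2) => //; first by rewrite coprime_sym.
by rewrite mulnAC [v * _ * _]mulnAC.
Qed.

Lemma s_le (s : nat -> nat) (hs : forall i, s i < s i.+1) i k : i <= k -> s i <= s k.
Proof.
elim: k => [|k IH]; first by rewrite leqn0 => /eqP ->.
rewrite leq_eqVlt => /orP [/eqP -> //| lt].
by apply: leq_trans (IH lt) (ltnW (hs k)).
Qed.

Definition W (A B : nat) (s : nat -> nat) (S M : nat) (f : nat -> nat) : nat :=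
  \sum_(0 <= i < M) f i * A ^ s i * B ^ (S - s i).

Lemma W_split A B s S M f j : j < M ->
  W A B s S M f = \sum_(0 <= i < j) (f i * A ^ s i * B ^ (S - s i))
     + f j * A ^ s j * B ^ (S - s j)
     + \sum_(j.+1 <= i < M) (f i * A ^ s i * B ^ (S - s i)).
Proof.
move=> jM; rewrite /W (@big_cat_nat _ _ _ j 0 M) ?(ltnW jM) //  /= (@big_ltn _ _ _ j M) //.
by rewrite addnA.
Qed.

Lemma W_uniq_min A B s (hs : forall i, s i < s i.+1) S M f g :
  0 < A -> coprime A B ->
  W A B s S M f = W A B s S M g ->
  (forall i, i < M -> f i < A ^ (s i.+1 - s i)) ->
  (forall i, i < M -> g i < A ^ (s i.+1 - s i)) ->
  forall i, i < M -> f i = g i.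
Proof.
move=> A0 co E hf hg.
suff H : forall j, j <= M -> forall i, i < j -> f i = g i.
  by move=> i iM; apply: (H M).
elim=> [|j IH] jM i; first by [].
have jM' : j < M by [].
have IH' := IH (ltnW jM').
rewrite ltnS leq_eqVlt => /orP [/eqP ->|]; last exact: IH'.
move: E; rewrite (W_split _ _ _ _ _ f _ jM') (W_split _ _ _ _ _ g _ jM').
rewrite (@eq_big_nat _ _ _ 0 j (fun i => f i * A ^ s i * B ^ (S - s i))
   (fun i => g i * A ^ s i * B ^ (S - s i))); last first.
  by move=> k /andP [_ kj]; rewrite IH'.
rewrite -!addnA => /addnI E.
have hd : s j + (s j.+1 - s j) = s j.+1 by rewrite subnKC // ltnW.
apply: (@key_min A B (s j) (s j.+1 - s j) (S - s j) _ _ _ _ A0 co _ _ _ _ E).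
- exact: hf.
- exact: hg.
- rewrite hd big_nat_cond; apply: dvdn_sum => k /andP [/andP [jk _] _].
  by apply: dvdn_mulr; apply: dvdn_mull; apply: dvdn_exp2l; apply: s_le.
- rewrite hd big_nat_cond; apply: dvdn_sum => k /andP [/andP [jk _] _].
  by apply: dvdn_mulr; apply: dvdn_mull; apply: dvdn_exp2l; apply: s_le.
Qed.

Lemma W_uniq_max A B s (hs : forall i, s i < s i.+1) S M f g :
  0 < A -> 0 < B -> coprime A B -> (forall i, i < M -> s i <= S) ->
  W A B s S M f = W A B s S M g ->
  (forall i, 0 < i -> i < M -> f i < B ^ (s i - s i.-1)) ->
  (forall i, 0 < i -> i < M -> g i < B ^ (s i - s i.-1)) ->
  forall i, i < M -> f i = g i.
Proof.
move=> A0 B0 co sS E hf hg.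
suff H : forall t, t <= M -> forall i, M - t <= i -> i < M -> f i = g i.
  by move=> i iM; apply: (H M) => //; rewrite subnn.
elim=> [|t IH] tM i; first by rewrite subn0 => h1 h2; move: (leq_ltn_trans h1 h2); rewrite ltnn.
have IH' := IH (ltnW tM).
set j := M - t.+1.
have jM : j < M by rewrite /j; lia.
rewrite leq_eqVlt => /orP [/eqP <-|ji iM]; last by apply: IH' => //; rewrite /j in ji; lia.
move=> _.
move: E; rewrite (W_split _ _ _ _ _ f _ jM) (W_split _ _ _ _ _ g _ jM).
rewrite (@eq_big_nat _ _ _ j.+1 M (fun i => f i * A ^ s i * B ^ (S - s i))
   (fun i => g i * A ^ s i * B ^ (S - s i))); last first.
  by move=> k /andP [jk kM]; rewrite IH' //; rewrite /j in jk; lia.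
move=> /addIn.
case: (posnP j) => [j0|j0].
  rewrite j0 !big_geq // !add0n => /eqP; rewrite eqn_pmul2r ?expn_gt0 ?B0 //.
  by rewrite eqn_pmul2r ?expn_gt0 ?A0 // => /eqP.
rewrite [X in X = _]addnC [X in _ = X]addnC => E.
have sjS : s j <= S by apply: sS.
have hd : S - s j + (s j - s j.-1) = S - s j.-1.
  have : s j.-1 < s j by have := hs j.-1; rewrite prednK.
  lia.
apply: (@key_max A B (s j) (s j - s j.-1) (S - s j) _ _ _ _ B0 co _ _ _ _ E).
- exact: hf.
- exact: hg.
- rewrite hd big_nat_cond; apply: dvdn_sum => k /andP [/andP [_ kj] _].
  apply: dvdn_mull; apply: dvdn_exp2l; apply: leq_sub2l; apply: s_le => //; lia.
- rewrite hd big_nat_cond; apply: dvdn_sum => k /andP [/andP [_ kj] _].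
  apply: dvdn_mull; apply: dvdn_exp2l; apply: leq_sub2l; apply: s_le => //; lia.
Qed.
Local Open Scope ring_scope.

Definition V (r : rat) (s : nat -> nat) (M : nat) (f : nat -> nat) : rat :=
  \sum_(i < M) (f i)%:R * r ^+ s i.

Lemma rB (r : rat) (A B : nat) : numq r = A%:Z -> denq r = B%:Z -> r * B%:R = A%:R.
Proof.
move=> hA hB; have := divq_num_den r; rewrite hA hB => <-.
have B0 : (B%:R : rat) != 0 by rewrite pnatr_eq0 -lt0n -(ltz_nat 0) -hB denq_gt0.
by rewrite divfK.
Qed.

Lemma rpow (r : rat) (A B : nat) k d : r * B%:R = A%:R ->
  (B ^ d)%:R * r ^+ (k + d) = (A ^ d)%:R * r ^+ k.
Proof.
move=> h; rewrite exprD !natrX mulrCA -exprMn [B%:R * r]mulrC h.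
by rewrite mulrC.
Qed.

Lemma VW (r : rat) (A B : nat) s S M f : r * B%:R = A%:R ->
  (forall i, (i < M)%N -> (s i <= S)%N) ->
  ((W A B s S M f)%:R : rat) = V r s M f * (B ^ S)%:R.
Proof.
move=> h sS; rewrite /W big_mkord natr_sum /V mulr_suml; apply: eq_bigr => i _.
have hi := sS i (ltn_ord i).
have -> : (B ^ S = B ^ s i * B ^ (S - s i))%N by rewrite -expnD subnKC.
rewrite !natrM !natrX mulrA -[(f i)%:R * r ^+ s i * _]mulrA -exprMn h.
by []. Qed.

Lemma V_uniq_min (r : rat) (A B : nat) s (hs : forall i, (s i < s i.+1)%N) M f g :
  r * B%:R = A%:R -> (0 < A)%N -> (0 < B)%N -> coprime A B ->
  V r s M f = V r s M g ->
  (forall i, (i < M)%N -> (f i < A ^ (s i.+1 - s i))%N) ->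
  (forall i, (i < M)%N -> (g i < A ^ (s i.+1 - s i))%N) ->
  forall i, (i < M)%N -> f i = g i.
Proof.
move=> h A0 B0 co E hf hg.
have sS : forall i, (i < M)%N -> (s i <= s M)%N by move=> i iM; apply: s_le => //; apply: ltnW.
apply: (@W_uniq_min A B s hs (s M)) => //.
apply/eqP; rewrite -(eqr_nat rat) (VW _ _ _ _ _ _ f h sS) (VW _ _ _ _ _ _ g h sS) E eqxx //=.
Qed.

Lemma V_uniq_max (r : rat) (A B : nat) s (hs : forall i, (s i < s i.+1)%N) M f g :
  r * B%:R = A%:R -> (0 < A)%N -> (0 < B)%N -> coprime A B ->
  V r s M f = V r s M g ->
  (forall i, (0 < i)%N -> (i < M)%N -> (f i < B ^ (s i - s i.-1))%N) ->
  (forall i, (0 < i)%N -> (i < M)%N -> (g i < B ^ (s i - s i.-1))%N) ->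
  forall i, (i < M)%N -> f i = g i.
Proof.
move=> h A0 B0 co E hf hg.
have sS : forall i, (i < M)%N -> (s i <= s M)%N by move=> i iM; apply: s_le => //; apply: ltnW.
apply: (@W_uniq_max A B s hs (s M)) => //.
apply/eqP; rewrite -(eqr_nat rat) (VW _ _ _ _ _ _ f h sS) (VW _ _ _ _ _ _ g h sS) E eqxx //=.
Qed.

Lemma V_upd (r : rat) s M f f' j : (j < M)%N -> (forall i, i != j -> f' i = f i) ->
  V r s M f' + (f j)%:R * r ^+ s j = V r s M f + (f' j)%:R * r ^+ s j.
Proof.
move=> jM hf; rewrite /V (bigD1 (Ordinal jM)) //= [in RHS](bigD1 (Ordinal jM)) //=.
rewrite (eq_bigr (fun i : 'I_M => (f i)%:R * r ^+ s i)); last first.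
  by move=> i ni; rewrite hf //; move: ni; apply: contra => /eqP h; apply/eqP; apply: val_inj.
by rewrite addrAC [X in _ = X]addrAC [_ + _ * _]addrC.
Qed.

Lemma L_upd M (f f' : nat -> nat) j : (j < M)%N -> (forall i, i != j -> f' i = f i) ->
  (\sum_(i < M) f' i + f j = \sum_(i < M) f i + f' j)%N.
Proof.
move=> jM hf; rewrite (bigD1 (Ordinal jM)) //= [in RHS](bigD1 (Ordinal jM)) //=.
rewrite (eq_bigr (fun i : 'I_M => f i)); last by move=> i ni; rewrite hf //; move: ni; apply: contra => /eqP h; apply/eqP; apply: val_inj.
lia.
Qed.

Lemma fv_V r s c M : (size c <= M)%N -> fact_value r s c = V r s M (nth 0%N c).
Proof.
move=> hM; rewrite /fact_value /V (big_ord_widen _ (fun i => (nth 0%N c i)%:R * r ^+ s i) hM).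
rewrite big_mkcond /=; apply: eq_bigr => i _; case: ifP => // /negbT.
by rewrite -leqNgt => h; rewrite nth_default // mul0r.
Qed.

Lemma fl_L c M : (size c <= M)%N -> fact_len c = (\sum_(i < M) nth 0%N c i)%N.
Proof.
move=> hM; rewrite /fact_len sumnE (big_nth 0%N) big_mkord.
rewrite (big_ord_widen _ (fun i => nth 0%N c i) hM) big_mkcond /=.
apply: eq_bigr => i _; case: ifP => // /negbT.
by rewrite -leqNgt => h; rewrite nth_default.
Qed.

Lemma PoszX' n k : ((n%:Z) ^+ k = (n ^ k)%N%:Z)%R.
Proof. by elim: k => // k IH; rewrite exprS IH expnS PoszM. Qed.

Definition Anum (r : rat) := `|numq r|%N.
Definition Bden (r : rat) := `|denq r|%N.

Lemma hA r : 0 < r -> numq r = (Anum r)%:Z.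
Proof. by move=> r0; rewrite /Anum gez0_abs // ltW // numq_gt0. Qed.

Lemma hB r : denq r = (Bden r)%:Z.
Proof. by rewrite /Bden gez0_abs // ltW // denq_gt0. Qed.

Lemma B0 r : (0 < Bden r)%N.
Proof. by rewrite -(ltz_nat 0) -hB denq_gt0. Qed.

Lemma A0 r : 0 < r -> (0 < Anum r)%N.
Proof. by move=> r0; rewrite -(ltz_nat 0) -hA // numq_gt0. Qed.

Lemma rB' r : 0 < r -> r * (Bden r)%:R = (Anum r)%:R.
Proof. by move=> r0; apply: rB; [apply: hA | apply: hB]. Qed.

Lemma BA r : 1 < r -> (Bden r < Anum r)%N.
Proof.
move=> r1; have r0 : 0 < r by apply: lt_trans r1.
rewrite -(ltr_nat rat) -(rB' r r0).
have Bp : 0 < ((Bden r)%:R : rat) by rewrite ltr0n B0.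
by rewrite -{1}[_%:R]mul1r ltr_pM2r.
Qed.

Lemma B2 r : 1 < r -> ~ (exists m : nat, r = m%:R) -> (1 < Bden r)%N.
Proof.
move=> r1 hn; have r0 : 0 < r by apply: lt_trans r1.
have := B0 r; rewrite leq_eqVlt => /orP [/eqP h|//].
exfalso; apply: hn; exists (Anum r); rewrite -(rB' r r0) -h; by rewrite mulr1.
Qed.

Definition minC (r : rat) s c := forall i, (i < size c)%N ->
  (nth 0%N c i)%:Z < numq r ^+ (s i.+1 - s i).
Definition maxC (r : rat) s c := forall i, (0 < i)%N -> (i < size c)%N ->
  (nth 0%N c i)%:Z < denq r ^+ (s i - s i.-1).

Lemma minCE r s c : 0 < r -> minC r s c <->
  (forall i, (i < size c)%N -> (nth 0%N c i < Anum r ^ (s i.+1 - s i))%N).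
Proof.
move=> r0; rewrite /minC (hA r r0).
by split=> h i hi; move: (h i hi); rewrite PoszX' ltz_nat.
Qed.

Lemma maxCE r s c : maxC r s c <->
  (forall i, (0 < i)%N -> (i < size c)%N -> (nth 0%N c i < Bden r ^ (s i - s i.-1))%N).
Proof.
rewrite /maxC hB.
by split=> h i hi hi'; move: (h i hi hi'); rewrite PoszX' ltz_nat.
Qed.

Lemma fact_eq_len c d : fact_eq c d -> fact_len c = fact_len d.
Proof.
move=> h; rewrite (@fl_L c (maxn (size c) (size d))) ?leq_maxl //.
rewrite (@fl_L d (maxn (size c) (size d))) ?leq_maxr //.
by apply: eq_bigr => i _; rewrite h.
Qed.

Lemma U1 r s (hs : forall i, (s i < s i.+1)%N) c d : 0 < r ->
  fact_value r s c = fact_value r s d -> minC r s c -> minC r s d -> fact_eq c d.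
Proof.
move=> r0 E /(minCE _ _ _ r0) hc /(minCE _ _ _ r0) hd.
set M := maxn (size c) (size d).
move: E; rewrite (@fv_V r s c M) ?leq_maxl // (@fv_V r s d M) ?leq_maxr // => E.
have H := @V_uniq_min r _ _ s hs M _ _ (rB' r r0) (A0 r r0) (B0 r) (coprime_num_den r) E.
move=> i; case: (ltnP i M) => iM; last first.
  by rewrite !nth_default //; apply: leq_trans iM; rewrite ?leq_maxl ?leq_maxr.
apply: H => // k kM.
- case: (ltnP k (size c)) => kc; first exact: hc.
  by rewrite nth_default // expn_gt0 A0.
- case: (ltnP k (size d)) => kc; first exact: hd.
  by rewrite nth_default // expn_gt0 A0.
Qed.

Lemma U2 r s (hs : forall i, (s i < s i.+1)%N) c d : 0 < r ->
  fact_value r s c = fact_value r s d -> maxC r s c -> maxC r s d -> fact_eq c d.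
Proof.
move=> r0 E /maxCE hc /maxCE hd.
set M := maxn (size c) (size d).
move: E; rewrite (@fv_V r s c M) ?leq_maxl // (@fv_V r s d M) ?leq_maxr // => E.
have H := @V_uniq_max r _ _ s hs M _ _ (rB' r r0) (A0 r r0) (B0 r) (coprime_num_den r) E.
move=> i; case: (ltnP i M) => iM; last first.
  by rewrite !nth_default //; apply: leq_trans iM; rewrite ?leq_maxl ?leq_maxr.
apply: H => // k k0 kM.
- case: (ltnP k (size c)) => kc; first exact: hc.
  by rewrite nth_default // expn_gt0 B0.
- case: (ltnP k (size d)) => kc; first exact: hd.
  by rewrite nth_default // expn_gt0 B0.
Qed.

Lemma R1 r s (hs : forall i, (s i < s i.+1)%N) c : 1 < r -> ~ minC r s c ->
  exists d, fact_value r s d = fact_value r s c /\ (fact_len d < fact_len c)%N.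
Proof.
move=> r1 hn; have r0 : 0 < r by apply: lt_trans r1.
have [j [jc hj]] : exists j, (j < size c)%N /\ (Anum r ^ (s j.+1 - s j) <= nth 0%N c j)%N.
  apply: NNPP => H; apply: hn; apply/(minCE _ _ _ r0) => i ic.
  rewrite ltnNge; apply/negP => hi; apply: H; by exists i.
set P := (Anum r ^ (s j.+1 - s j))%N; set Q := (Bden r ^ (s j.+1 - s j))%N.
set c1 := set_nth 0%N c j (nth 0%N c j - P)%N.
set d := set_nth 0%N c1 j.+1 (nth 0%N c j.+1 + Q)%N.
exists d.
set M := (size c).+2.
have sc : (size c <= M)%N by rewrite /M; lia.
have sd : (size d <= M)%N by rewrite /d /c1 !size_set_nth /M; lia.
have jM : (j < M)%N by rewrite /M; lia.
have jM' : (j.+1 < M)%N by rewrite /M; lia.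
have e1 : forall i, i != j -> nth 0%N c1 i = nth 0%N c i.
  by move=> i ni; rewrite /c1 nth_set_nth /= (negbTE ni).
have e2 : forall i, i != j.+1 -> nth 0%N d i = nth 0%N c1 i.
  by move=> i ni; rewrite /d nth_set_nth /= (negbTE ni).
have c1j : nth 0%N c1 j = (nth 0%N c j - P)%N by rewrite /c1 nth_set_nth /= eqxx.
have c1j1 : nth 0%N c1 j.+1 = nth 0%N c j.+1 by rewrite e1 // neq_ltn ltnSn orbT.
have dj1 : nth 0%N d j.+1 = (nth 0%N c j.+1 + Q)%N by rewrite /d nth_set_nth /= eqxx.
have QP : (Q < P)%N by rewrite /P /Q ltn_exp2r ?subn_gt0 // BA.
split.
- rewrite (@fv_V r s _ _ sd) (@fv_V r s _ _ sc).
  have E1 := @V_upd r s _ _ _ _ jM e1.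
  have E2 := @V_upd r s _ _ _ _ jM' e2.
  rewrite c1j natrB // in E1.
  rewrite dj1 c1j1 natrD in E2.
  have E3 : (Q%:R : rat) * r ^+ s j.+1 = P%:R * r ^+ s j.
    have -> : s j.+1 = (s j + (s j.+1 - s j))%N by rewrite subnKC // ltnW.
    exact: rpow (rB' r r0).
  lra.
- rewrite (@fl_L _ _ sd) (@fl_L _ _ sc).
  have E1 := @L_upd _ _ _ _ jM e1.
  have E2 := @L_upd _ _ _ _ jM' e2.
  rewrite c1j in E1; rewrite dj1 c1j1 in E2.
  lia.
Qed.

Lemma R2 r s (hs : forall i, (s i < s i.+1)%N) c : 1 < r -> ~ maxC r s c ->
  exists d, fact_value r s d = fact_value r s c /\ (fact_len c < fact_len d)%N.
Proof.
move=> r1 hn; have r0 : 0 < r by apply: lt_trans r1.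
have [j [j0 [jc hj]]] : exists j, (0 < j)%N /\ (j < size c)%N /\
    (Bden r ^ (s j - s j.-1) <= nth 0%N c j)%N.
  apply: NNPP => H; apply: hn; apply/maxCE => i i0 ic.
  rewrite ltnNge; apply/negP => hi; apply: H; by exists i.
have sj : s j = (s j.-1 + (s j - s j.-1))%N.
  by rewrite subnKC //; have := hs j.-1; rewrite prednK // => /ltnW.
set P := (Anum r ^ (s j - s j.-1))%N; set Q := (Bden r ^ (s j - s j.-1))%N.
set c1 := set_nth 0%N c j (nth 0%N c j - Q)%N.
set d := set_nth 0%N c1 j.-1 (nth 0%N c j.-1 + P)%N.
exists d.
set M := (size c).+2.
have sc : (size c <= M)%N by rewrite /M; lia.
have sd : (size d <= M)%N by rewrite /d /c1 !size_set_nth /M; lia.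
have jM : (j < M)%N by rewrite /M; lia.
have jM' : (j.-1 < M)%N by rewrite /M; lia.
have e1 : forall i, i != j -> nth 0%N c1 i = nth 0%N c i.
  by move=> i ni; rewrite /c1 nth_set_nth /= (negbTE ni).
have e2 : forall i, i != j.-1 -> nth 0%N d i = nth 0%N c1 i.
  by move=> i ni; rewrite /d nth_set_nth /= (negbTE ni).
have c1j : nth 0%N c1 j = (nth 0%N c j - Q)%N by rewrite /c1 nth_set_nth /= eqxx.
have c1j1 : nth 0%N c1 j.-1 = nth 0%N c j.-1.
  by rewrite e1 // neq_ltn; apply/orP; left; rewrite prednK.
have dj1 : nth 0%N d j.-1 = (nth 0%N c j.-1 + P)%N by rewrite /d nth_set_nth /= eqxx.
have QP : (Q < P)%N.
  rewrite /P /Q ltn_exp2r ?BA // subn_gt0; have := hs j.-1; rewrite prednK //.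
split.
- rewrite (@fv_V r s _ _ sd) (@fv_V r s _ _ sc).
  have E1 := @V_upd r s _ _ _ _ jM e1.
  have E2 := @V_upd r s _ _ _ _ jM' e2.
  rewrite c1j natrB // in E1.
  rewrite dj1 c1j1 natrD in E2.
  have E3 : (Q%:R : rat) * r ^+ s j = P%:R * r ^+ s j.-1.
    rewrite sj; exact: rpow (rB' r r0).
  lra.
- rewrite (@fl_L _ _ sd) (@fl_L _ _ sc).
  have E1 := @L_upd _ _ _ _ jM e1.
  have E2 := @L_upd _ _ _ _ jM' e2.
  rewrite c1j in E1; rewrite dj1 c1j1 in E2.
  lia.
Qed.

Lemma bnd r s d : 1 < r -> (fact_len d)%:R <= fact_value r s d.
Proof.
move=> r1; rewrite (@fv_V r s d (size d)) // (@fl_L d (size d)) // natr_sum /V.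
apply: ler_sum => i _; apply: ler_peMr; first exact: ler0n.
by apply: exprn_ege1; apply: ltW.
Qed.

Lemma ex_min r s (hs : forall i, (s i < s i.+1)%N) x c : 1 < r -> is_fact r s x c ->
  exists z, is_fact r s x z /\ minC r s z /\ (fact_len z <= fact_len c)%N.
Proof.
move=> r1.
suff H : forall n c, (fact_len c <= n)%N -> is_fact r s x c ->
  exists z, is_fact r s x z /\ minC r s z /\ (fact_len z <= fact_len c)%N.
  by move=> hc; apply: (H (fact_len c)).
elim=> [|n IH] c' hn hc; case: (classic (minC r s c')) => hm.
- by exists c'.
- have [d [hd hl]] := R1 _ _ hs _ r1 hm; move: hl; rewrite leqNgt; move: hn; lia.
- by exists c'.
- have [d [hd hl]] := R1 _ _ hs _ r1 hm.
  have [z [hz1 [hz2 hz3]]] := IH d (ltnSE (leq_trans hl hn)) (etrans hd hc).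
  exists z; split=> //; split=> //; apply: leq_trans hz3 (ltnW hl).
Qed.

Lemma ex_max r s (hs : forall i, (s i < s i.+1)%N) x c K : 1 < r ->
  (forall d, is_fact r s x d -> (fact_len d <= K)%N) -> is_fact r s x c ->
  exists z, is_fact r s x z /\ maxC r s z /\ (fact_len c <= fact_len z)%N.
Proof.
move=> r1 hK.
suff H : forall n c, (K - fact_len c <= n)%N -> is_fact r s x c ->
  exists z, is_fact r s x z /\ maxC r s z /\ (fact_len c <= fact_len z)%N.
  by move=> hc; exact: (H _ c (leqnn _) hc).
elim=> [|n IH] c' hn hc; case: (classic (maxC r s c')) => hm.
- by exists c'.
- have [d [hd hl]] := R2 _ _ hs _ r1 hm.
  have := hK d (etrans hd hc); move: hn hl; lia.
- by exists c'.
- have [d [hd hl]] := R2 _ _ hs _ r1 hm.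
  have hdK := hK d (etrans hd hc).
  have [z [hz1 [hz2 hz3]]] := IH d ltac:(lia) (etrans hd hc).
  exists z; split=> //; split=> //; apply: leq_trans (ltnW hl) hz3.
Qed.

Lemma Kb r s x c : 1 < r -> is_fact r s x c ->
  exists K, forall d, is_fact r s x d -> (fact_len d <= K)%N.
Proof.
move=> r1 hc; have x0 : 0 <= x.
  by rewrite -hc; apply: le_trans (bnd _ s c r1); exact: ler0n.
exists (Num.Def.archi_bound x) => d hd.
have := bnd _ s d r1; rewrite hd => hb; have := le_lt_trans hb (archi_boundP x0); rewrite ltr_nat.
by move/ltnW.
Qed.

Lemma min_iff r s (hs : forall i, (s i < s i.+1)%N) x c : 1 < r -> is_fact r s x c ->
  is_min_fact r s x c <-> minC r s c.
Proof.
move=> r1 hc; have r0 : 0 < r by apply: lt_trans r1.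
split.
- move=> [_ hmin]; apply: NNPP => hn.
  have [d [hd hl]] := R1 _ _ hs _ r1 hn.
  have := hmin d (etrans hd hc); rewrite leqNgt hl //.
- move=> hm; split=> // d hd.
  have [z [hz1 [hz2 hz3]]] := ex_min _ _ hs _ _ r1 hd.
  have := U1 _ _ hs _ _ r0 (etrans hc (esym hz1)) hm hz2.
  by move/fact_eq_len => ->.
Qed.

Lemma max_iff r s (hs : forall i, (s i < s i.+1)%N) x c : 1 < r -> is_fact r s x c ->
  is_max_fact r s x c <-> maxC r s c.
Proof.
move=> r1 hc; have r0 : 0 < r by apply: lt_trans r1.
have [K hK] := Kb _ _ _ _ r1 hc.
split.
- move=> [_ hmax]; apply: NNPP => hn.
  have [d [hd hl]] := R2 _ _ hs _ r1 hn.
  have := hmax d (etrans hd hc); rewrite leqNgt hl //.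
- move=> hm; split=> // d hd.
  have [z [hz1 [hz2 hz3]]] := ex_max _ _ hs _ _ _ r1 hK hd.
  have := U2 _ _ hs _ _ r0 (etrans hc (esym hz1)) hm hz2.
  by move/fact_eq_len => ->.
Qed.

Theorem mainTheorem1 (N : pred nat) (s : nat -> nat) (r : rat)
  (hN : numerical_monoid N) (hs : increasing_enum N s)
  (hr1 : 1 < r) (hrnat : ~ exists m : nat, r = m%:R)
  (hat : atomic (puiseux r N))
  (x : rat) (hxS : puiseux r N x) (hx0 : x != 0)
  (c : seq nat) (hz : is_fact r s x c) :
  [/\ (* (1) *)
      is_min_fact r s x c <->
        (forall i, (i < size c)%N -> (nth 0%N c i)%:Z < numq r ^+ (s i.+1 - s i)),
      (* (2) *)
      (exists z, is_min_fact r s x z /\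
         forall w, is_min_fact r s x w -> fact_eq w z),
      (* (3) *)
      is_max_fact r s x c <->
        (forall i, (0 < i)%N -> (i < size c)%N ->
           (nth 0%N c i)%:Z < denq r ^+ (s i - s i.-1)),
      (* (4) *)
      (exists z, is_max_fact r s x z /\
         forall w, is_max_fact r s x w -> fact_eq w z)
    & (* (5) *)
      (forall i, (i < size c)%N -> (nth 0%N c i)%:Z < denq r) ->
        forall w, is_fact r s x w -> fact_eq w c ].
Proof.
have hs' : forall i, (s i < s i.+1)%N by case: hs.
have r0 : 0 < r by apply: lt_trans hr1.
split.
- exact: (min_iff _ _ hs' _ _ hr1 hz).
- have [z [hz1 [hz2 _]]] := ex_min _ _ hs' _ _ hr1 hz.
  exists z; split; first by apply/(min_iff _ _ hs' _ _ hr1 hz1).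
  move=> w hw; have hw1 := hw.1.
  apply: (U1 _ _ hs' _ _ r0 (etrans hw1 (esym hz1)) _ hz2).
  by apply/(min_iff _ _ hs' _ _ hr1 hw1).
- exact: (max_iff _ _ hs' _ _ hr1 hz).
- have [K hK] := Kb _ _ _ _ hr1 hz.
  have [z [hz1 [hz2 _]]] := ex_max _ _ hs' _ _ _ hr1 hK hz.
  exists z; split; first by apply/(max_iff _ _ hs' _ _ hr1 hz1).
  move=> w hw; have hw1 := hw.1.
  apply: (U2 _ _ hs' _ _ r0 (etrans hw1 (esym hz1)) _ hz2).
  by apply/(max_iff _ _ hs' _ _ hr1 hw1).
- move=> h5 w hw.
  have h5' : forall i, (i < size c)%N -> (nth 0%N c i < Bden r)%N.
    by move=> i ic; have := h5 i ic; rewrite hB ltz_nat.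
  have hmin : minC r s c.
    apply/(minCE _ _ _ r0) => i ic.
    apply: (leq_trans (h5' i ic)); apply: (leq_trans (ltnW (BA _ hr1))).
    rewrite -{1}[Anum r]expn1 leq_pexp2l ?A0 // subn_gt0.
    exact: hs'.
  have hmax : maxC r s c.
    apply/maxCE => i i0 ic.
    apply: (leq_trans (h5' i ic)).
    rewrite -{1}[Bden r]expn1 leq_pexp2l ?B0 // subn_gt0.
    by have := hs' i.-1; rewrite prednK.
  have [_ hm1] := (min_iff _ _ hs' _ _ hr1 hz).2 hmin.
  have [_ hm2] := (max_iff _ _ hs' _ _ hr1 hz).2 hmax.
  have hwmin : is_min_fact r s x w.
    split=> // d hd; apply: leq_trans (hm2 w hw) (hm1 d hd).
  apply: (U1 _ _ hs' _ _ r0 (etrans hw (esym hz)) _ hmin).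
  by apply/(min_iff _ _ hs' _ _ hr1 hw).
Qed.
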